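(* Let $\mathcal{H}$ be an $n$-dimensional (real or complex) Hilbert space, let $F=\{f_i\}_{i=1}^N$ be a Parseval frame for $\mathcal{H}$, and let $\{q_i\}_{i=1}^N$ be the weight number sequence associated with a probability sequence $\{p_i\}_{i=1}^N$. Then the following are equivalent: (i) the canonical dual of $F$ is a 1-erasure POD of $F$; (ii) the canonical dual of $F$ is a 1-erasure PSOD of $F$; (iii) the canonical dual of $F$ is a 1-erasure PASOD-frame of $F$.
   Context: A finite sequence $F=\{f_i\}_{i=1}^N$ in $\mathcal{H}$ is a Parseval frame if $\sum_{i=1}^N|\langle f,f_i\rangle|^2=\|f\|^2$ for all $f$; its frame operator $S_Ff=\sum_i\langle f,f_i\rangle f_i$ is then the identity and the canonical dual is $S_F^{-1}F=\{S_F^{-1}f_i\}_{i=1}^N$. A frame $G=\{g_i\}_{i=1}^N$ is a dual of $F$ if $f=\sum_i\langle f,f_i\rangle g_i=\sum_i\langle f,g_i\rangle f_i$ for all $f$. A probability sequence is $\{p_i\}_{i=1}^N$ with $0\le p_i\le1$, $\sum p_i=1$; weight numbers $q_i=\frac{\sum_{j} p_j}{\sum_{j} p_j-p_i}\cdot\frac{N-1}{n}$. For $\Lambda\subseteq\{1,\dots,N\}$ the error operator is $E_{\Lambda,(F,G)}f=\sum_{i\in\Lambda}q_i\langle f,f_i\rangle g_i$. Let $\mathcal{O}_P^{(1)}(F,G)=\max_{|\Lambda|=1}\|E_{\Lambda,(F,G)}\|$, $r_P^{(1)}(F,G)=\max_{|\Lambda|=1}\rho(E_{\Lambda,(F,G)})$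 ($\rho$ = spectral radius), $\mathcal{A}_P^{(1)}(F,G)=\max_{|\Lambda|=1}\frac{\|E_{\Lambda,(F,G)}\|+\rho(E_{\Lambda,(F,G)})}{2}$. A dual $G$ of $F$ is a 1-erasure POD (resp. PSOD, PASOD-frame) of $F$ if it minimizes $\mathcal{O}_P^{(1)}(F,\cdot)$ (resp. $r_P^{(1)}(F,\cdot)$, $\mathcal{A}_P^{(1)}(F,\cdot)$) over all duals of $F$. *)

(* Defs.v *)
(* Finite-dimensional Hilbert spaces are K^n = 'cV[K]_n with
   K = R (real case) or K = R[i] (complex case), R a real closed field. *)
From HB Require Import structures.
From mathcomp Require Import all_boot all_order all_algebra.
From mathcomp.real_closed Require Import complex.
Set Implicit Arguments. Unset Strict Implicit. Unset Printing Implicit Defensive.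
Import Order.TTheory GRing.Theory Num.Theory.
Local Open Scope ring_scope.

Section FrameDefs.
(* K : scalar field of the Hilbert space, cj : its conjugation (id for real,
   complex conjugation for complex); C : an algebraically closed field
   containing K via iota, used for the spectrum (the spectral radius of an
   operator on a real space is computed from its complex eigenvalues). *)
Variables (K : numFieldType) (cj : K -> K) (C : numClosedFieldType)
          (iota : K -> C).
Variables (n N : nat).

Definition ip (x y : 'cV[K]_n) : K := \sum_(j < n) x j 0 * cj (y j 0).
Definition sqnorm (x : 'cV[K]_n) : K := ip x x.

Definition adj (m k : nat) (A : 'M[K]_(m, k)) : 'M[K]_(k, m) :=
  \matrix_(i, j) cj (A j i).

Definition parseval (F : 'I_N -> 'cV[K]_n) : Prop :=
  forall f : 'cV[K]_n, \sum_(i < N) `|ip f (F i)| ^+ 2 = sqnorm f.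

Definition frame_op (F : 'I_N -> 'cV[K]_n) : 'M[K]_n :=
  \sum_(i < N) (F i *m adj (F i)).

Definition canonical_dual (F : 'I_N -> 'cV[K]_n) : 'I_N -> 'cV[K]_n :=
  fun i => invmx (frame_op F) *m F i.

Definition is_dual (F G : 'I_N -> 'cV[K]_n) : Prop :=
  forall f : 'cV[K]_n,
    f = \sum_(i < N) ip f (F i) *: G i /\ f = \sum_(i < N) ip f (G i) *: F i.

Definition prob_seq (p : 'I_N -> K) : Prop :=
  (forall i, 0 <= p i <= 1) /\ \sum_(i < N) p i = 1.

Definition weight (p : 'I_N -> K) (i : 'I_N) : K :=
  (\sum_(j < N) p j) / (\sum_(j < N) p j - p i) * ((N.-1)%:R / n%:R).

Definition err_op (p : 'I_N -> K) (F G : 'I_N -> 'cV[K]_n)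
  (L : {set 'I_N}) : 'M[K]_n :=
  \sum_(i in L) weight p i *: (G i *m adj (F i)).

Definition is_opnorm (A : 'M[K]_n) (c : K) : Prop :=
  [/\ 0 <= c,
      forall x : 'cV[K]_n, sqnorm (A *m x) <= c ^+ 2 * sqnorm x &
      forall d, 0 <= d ->
        (forall x : 'cV[K]_n, sqnorm (A *m x) <= d ^+ 2 * sqnorm x) -> c <= d].

Definition eigenval (A : 'M[K]_n) (l : C) : Prop :=
  exists2 v : 'cV[C]_n, v != 0 & map_mx iota A *m v = l *: v.

Definition is_specrad (A : 'M[K]_n) (r : C) : Prop :=
  [/\ 0 <= r, (forall l, eigenval A l -> `|l| <= r) &
      (r = 0 \/ exists2 l, eigenval A l & `|l| = r)].

Definition is_max1 (T : numDomainType) (P : {set 'I_N} -> T -> Prop) (v : T)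
  : Prop :=
  (exists L : {set 'I_N}, #|L| = 1%N /\ P L v) /\
  (forall (L : {set 'I_N}) w, #|L| = 1%N -> P L w -> w <= v).

Definition is_O1 (p : 'I_N -> K) (F G : 'I_N -> 'cV[K]_n) (v : K) : Prop :=
  is_max1 (fun L c => is_opnorm (err_op p F G L) c) v.

Definition is_r1 (p : 'I_N -> K) (F G : 'I_N -> 'cV[K]_n) (v : C) : Prop :=
  is_max1 (fun L r => is_specrad (err_op p F G L) r) v.

Definition is_A1 (p : 'I_N -> K) (F G : 'I_N -> 'cV[K]_n) (v : C) : Prop :=
  is_max1 (fun L a => exists c r, [/\ is_opnorm (err_op p F G L) c,
                                     is_specrad (err_op p F G L) r &
                                     a = (iota c + r) / 2]) v.

Definition is_POD1 (p : 'I_N -> K) (F G : 'I_N -> 'cV[K]_n) : Prop :=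
  is_dual F G /\ exists2 v, is_O1 p F G v &
    forall G' v', is_dual F G' -> is_O1 p F G' v' -> v <= v'.

Definition is_PSOD1 (p : 'I_N -> K) (F G : 'I_N -> 'cV[K]_n) : Prop :=
  is_dual F G /\ exists2 v, is_r1 p F G v &
    forall G' v', is_dual F G' -> is_r1 p F G' v' -> v <= v'.

Definition is_PASOD1 (p : 'I_N -> K) (F G : 'I_N -> 'cV[K]_n) : Prop :=
  is_dual F G /\ exists2 v, is_A1 p F G v &
    forall G' v', is_dual F G' -> is_A1 p F G' v' -> v <= v'.

End FrameDefs.

(* Main.v *)
Require Import Defs.
From HB Require Import structures.
From mathcomp Require Import all_boot all_order all_algebra.
From mathcomp.real_closed Require Import complex.
From mathcomp Require Import ring lra.
From Stdlib Require Import FunctionalExtensionality.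
Import Order.TTheory GRing.Theory Num.Theory.
Local Open Scope ring_scope.

Module GenPart.
Set Implicit Arguments. Unset Strict Implicit. Unset Printing Implicit Defensive.
Section Basic.
Variables (K : numFieldType) (cj : K -> K).
Hypotheses (cjD : {morph cj : x y / x + y}) (cjM : {morph cj : x y / x * y})
  (cjK : involutive cj) (cj_ge0 : forall x, 0 <= x -> cj x = x)
  (mul_cj : forall x, x * cj x = `|x| ^+ 2).
Hypothesis (cj_pol : forall z, (forall k, cj k * z + k * cj z = 0) -> z = 0).
Hypothesis (cj_Re : forall x : K, x + cj x <= `|x| *+ 2).
Variable (sq : K -> K).
Hypotheses (sq_ge0 : forall x, 0 <= x -> 0 <= sq x) (sqK : forall x, 0 <= x -> sq x ^+ 2 = x).
Variables (C : numClosedFieldType) (iota : K -> C).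
Hypotheses (iotaD : {morph iota : x y / x + y}) (iotaM : {morph iota : x y / x * y})
  (iota0 : iota 0 = 0) (iota_norm : forall x, `|iota x| = iota `|x|)
  (iota_inj : forall x, iota x = 0 -> x = 0)
  (iota_le : forall x y, 0 <= x -> 0 <= y -> (iota x <= iota y) = (x <= y)).

Variable n : nat.
Implicit Types x y z : 'cV[K]_n.

Lemma cj0 : cj 0 = 0. Proof. exact: cj_ge0. Qed.
Lemma cj1 : cj 1 = 1. Proof. exact: cj_ge0. Qed.
Lemma cjN a : cj (- a) = - cj a.
Proof. by apply/eqP; rewrite -addr_eq0 -cjD addNr cj0. Qed.
Lemma cj_sum m (h : 'I_m -> K) : cj (\sum_(i < m) h i) = \sum_(i < m) cj (h i).
Proof. exact: (big_morph cj cjD cj0). Qed.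

Lemma ipDl x y z : ip cj (x + y) z = ip cj x z + ip cj y z.
Proof. by rewrite /ip -big_split /=; apply: eq_bigr => j _; rewrite mxE mulrDl. Qed.
Lemma ipZl a x z : ip cj (a *: x) z = a * ip cj x z.
Proof. by rewrite /ip mulr_sumr; apply: eq_bigr => j _; rewrite mxE mulrA. Qed.
Lemma ipDr x y z : ip cj x (y + z) = ip cj x y + ip cj x z.
Proof. by rewrite /ip -big_split /=; apply: eq_bigr => j _; rewrite mxE cjD mulrDr. Qed.
Lemma ipZr a x z : ip cj x (a *: z) = cj a * ip cj x z.
Proof.
by rewrite /ip mulr_sumr; apply: eq_bigr => j _; rewrite mxE cjM mulrCA.
Qed.
Lemma ipC x y : ip cj y x = cj (ip cj x y).
Proof. by rewrite /ip cj_sum; apply: eq_bigr => j _; rewrite cjM cjK mulrC. Qed.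
Lemma ipNl x z : ip cj (- x) z = - ip cj x z.
Proof. by rewrite -scaleN1r ipZl mulN1r. Qed.
Lemma ipBl x y z : ip cj (x - y) z = ip cj x z - ip cj y z.
Proof. by rewrite ipDl ipNl. Qed.
Lemma ipsuml m (h : 'I_m -> 'cV[K]_n) z :
  ip cj (\sum_(i < m) h i) z = \sum_(i < m) ip cj (h i) z.
Proof.
elim/big_rec2: _ => [|i a b _ <-]; last by rewrite ipDl.
by rewrite /ip big1 // => j _; rewrite mxE mul0r.
Qed.
Lemma ip0r x : ip cj x 0 = 0.
Proof. by rewrite -(scale0r 0) ipZr cj0 mul0r. Qed.
Lemma ip0l x : ip cj 0 x = 0.
Proof. by rewrite -(scale0r 0) ipZl mul0r. Qed.

Lemma ip_ge0 x : 0 <= ip cj x x.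
Proof. by rewrite /ip sumr_ge0 // => j _; rewrite mul_cj exprn_ge0. Qed.

Lemma ip_eq0 x : ip cj x x = 0 -> x = 0.
Proof.
rewrite /ip => /eqP; rewrite psumr_eq0 => [/allP H|j _]; last first.
  by rewrite mul_cj exprn_ge0.
apply/matrixP => j k; rewrite ord1 mxE.
have /H : j \in index_enum 'I_n by rewrite mem_index_enum.
by rewrite /= mul_cj expf_eq0 /= normr_eq0 => /eqP.
Qed.

Lemma adj_mul x y : adj cj y *m x = (ip cj x y)%:M.
Proof.
apply/matrixP => i j; rewrite !ord1 !mxE /= /ip mulr1n.
by apply: eq_bigr => k _; rewrite mxE mulrC.
Qed.

Lemma rank1_mul (g f x : 'cV[K]_n) : (g *m adj cj f) *m x = ip cj x f *: g.
Proof. by rewrite -mulmxA adj_mul mul_mx_scalar. Qed.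

Lemma ip_real x y : cj (ip cj x y + ip cj y x) = ip cj x y + ip cj y x.
Proof. by rewrite cjD -!ipC addrC. Qed.

Lemma sqnormZ a x : sqnorm cj (a *: x) = `|a| ^+ 2 * sqnorm cj x.
Proof. by rewrite /sqnorm ipZl ipZr mulrA mul_cj. Qed.

Lemma CS x y : `|ip cj x y| ^+ 2 <= sqnorm cj x * sqnorm cj y.
Proof.
have [->|ny] := eqVneq y 0.
  by rewrite ip0r // normr0 expr0n /= /sqnorm ip0r // mulr0.
set s := sqnorm cj y.
have s_gt0 : 0 < s.
  rewrite lt_def ip_ge0 // andbT; apply/eqP => /ip_eq0 H.
  by move: ny; rewrite H ?eqxx.
set a := ip cj x y / s.
set u := x - a *: y.
have uy : ip cj u y = 0 by rewrite ipBl // ipZl /a divfK ?subrr // gt_eqF.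
have ex : sqnorm cj x = sqnorm cj u + `|a| ^+ 2 * s.
  have -> : x = u + a *: y by rewrite /u subrK.
  move: uy; move: (u) => u' uy'.
  rewrite /sqnorm ipDl !ipDr !ipZr !ipZl uy' mulr0 addr0 (ipC u' y) uy' cj0.
  by rewrite mulr0 add0r mulrA [cj a * a]mulrC mul_cj.
have -> : ip cj x y = a * s by rewrite /a divfK // gt_eqF.
rewrite ex normrM exprMn (ger0_norm (ltW s_gt0)) mulrDl expr2 mulrA lerDr.
by rewrite mulr_ge0 ?ip_ge0 // ltW.
Qed.

Lemma sqnorm_ge0 x : 0 <= sqnorm cj x.
Proof. exact: ip_ge0. Qed.

Lemma frame_opE N (F : 'I_N -> 'cV[K]_n) x :
  frame_op cj F *m x = \sum_(i < N) ip cj x (F i) *: F i.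
Proof.
by rewrite /frame_op mulmx_suml; apply: eq_bigr => i _; rewrite rank1_mul.
Qed.

Lemma parseval_S N (F : 'I_N -> 'cV[K]_n) : parseval cj F -> frame_op cj F = 1%:M.
Proof.
move=> PF.
pose T x := frame_op cj F *m x - x.
have ipS x y : ip cj (frame_op cj F *m x) y
    = \sum_(i < N) ip cj x (F i) * ip cj (F i) y.
  by rewrite frame_opE ipsuml //; apply: eq_bigr => i _; rewrite ipZl.
have h1 x : ip cj (T x) x = 0.
  rewrite /T ipBl // ipS; apply/eqP; rewrite subr_eq0.
  rewrite -[X in _ == X]/(sqnorm cj x) -PF; apply/eqP/eq_bigr => i _.
  by rewrite (ipC x (F i)) mul_cj.
have h2 x y : ip cj (T y) x = cj (ip cj (T x) y).
  rewrite /T !ipBl // !ipS cjD cjN // cj_sum //; congr (_ - _).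
    by apply: eq_bigr => i _; rewrite cjM -!ipC mulrC.
  by rewrite -ipC.
have Tlin x y k : T (x + k *: y) = T x + k *: T y.
  by rewrite /T mulmxDr -scalemxAr scalerBr opprD addrACA.
have h3 x y : ip cj (T x) y = 0.
  apply: cj_pol => k; have := h1 (x + k *: y).
  rewrite Tlin ipDl // !ipDr // !ipZl !ipZr // h1 h1 (h2 y x) mulr0 add0r.
  by rewrite mulr0 addr0 cjK.
have Tx0 x : T x = 0 by apply: ip_eq0; apply: h3.
apply/matrixP => i j; have := Tx0 (delta_mx j 0).
rewrite /T -colE => /eqP; rewrite subr_eq0 => /eqP /(congr1 (fun v : 'cV[K]_n => v i 0)).
by rewrite !mxE eqxx andbT.
Qed.

Lemma opnorm_rank1 (w sg sf : K) (g f : 'cV[K]_n) :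
  0 <= w -> 0 <= sg -> 0 <= sf -> sg ^+ 2 = sqnorm cj g -> sf ^+ 2 = sqnorm cj f ->
  is_opnorm cj (w *: (g *m adj cj f)) (w * sg * sf).
Proof.
move=> w0 sg0 sf0 Hg Hf.
have Ex x : sqnorm cj (w *: (g *m adj cj f) *m x)
    = w ^+ 2 * `|ip cj x f| ^+ 2 * sg ^+ 2.
  rewrite -scalemxAl rank1_mul // scalerA sqnormZ // normrM ger0_norm //.
  by rewrite exprMn Hg.
split.
- by rewrite !mulr_ge0.
- move=> x; rewrite Ex.
  have cs := CS x f; rewrite -Hf in cs.
  rewrite [X in _ <= X](_ : _ = w ^+ 2 * (sqnorm cj x * sf ^+ 2) * sg ^+ 2);
    last by ring.
  by rewrite ler_wpM2r ?exprn_ge0 // ler_wpM2l ?exprn_ge0.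
- move=> d d0 Hd; have := Hd f; rewrite Ex.
  have -> : ip cj f f = sf ^+ 2 by rewrite Hf.
  rewrite ger0_norm ?exprn_ge0 // -Hf.
  have [->|sfn0] := eqVneq sf 0; first by rewrite mulr0.
  have sf2 : 0 < sf ^+ 2 by rewrite exprn_gt0 // lt_def sfn0.
  rewrite [X in X <= _](_ : _ = (w * sg * sf) ^+ 2 * sf ^+ 2); last by ring.
  rewrite ler_pM2r // ler_pXn2r // nnegrE // !mulr_ge0 //.
Qed.

Lemma iota_ge0 (x : K) : 0 <= x -> 0 <= iota x.
Proof. by move=> x0; rewrite -iota0 iota_le. Qed.

Lemma iota_sum m (h : 'I_m -> K) : iota (\sum_(i < m) h i) = \sum_(i < m) iota (h i).
Proof. exact: (big_morph iota iotaD iota0). Qed.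

Lemma specrad_rank1 (w : K) (g f : 'cV[K]_n) :
  0 <= w -> is_specrad iota (w *: (g *m adj cj f)) (iota (w * `|ip cj g f|)).
Proof.
move=> w0.
have Mv (v : 'cV[C]_n) : map_mx iota (w *: (g *m adj cj f)) *m v
    = (iota w * \sum_(b < n) iota (cj (f b 0)) * v b 0) *: map_mx iota g.
  apply/matrixP => a k; rewrite ord1 !mxE.
  rewrite mulr_sumr mulr_suml; apply: eq_bigr => b _; rewrite !mxE big_ord1 !mxE !iotaM; ring.
have Sg : \sum_(b < n) iota (cj (f b 0)) * iota (g b 0) = iota (ip cj g f).
  by rewrite /ip iota_sum; apply: eq_bigr => b _; rewrite iotaM mulrC.
have nwip : w * `|ip cj g f| = `|w * ip cj g f| by rewrite normrM ger0_norm.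
split.
- by apply: iota_ge0; rewrite mulr_ge0.
- move=> l [v vn0]; rewrite Mv => hv.
  have [->|ln0] := eqVneq l 0; first by rewrite normr0 iota_ge0 ?mulr_ge0.
  set s := \sum_(b < n) _ in hv.
  have hb b : l * v b 0 = iota w * s * iota (g b 0).
    by have := congr1 (fun M : 'cV[C]_n => M b 0) hv; rewrite !mxE => <-.
  have ls : l * s = iota (w * ip cj g f) * s.
    have -> : l * s = \sum_(b < n) iota (cj (f b 0)) * (l * v b 0).
      by rewrite /s mulr_sumr; apply: eq_bigr => b _; rewrite mulrCA.
    under eq_bigr => b _ do rewrite hb.
    rewrite iotaM -Sg.
    transitivity (\sum_(b < n) iota w * s * (iota (cj (f b 0)) * iota (g b 0))).
      by apply: eq_bigr => b _; ring.
    by rewrite -mulr_sumr; ring.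
  have sn0 : s != 0.
    apply: contraNneq vn0 => s0; move: hv; rewrite s0 mulr0 scale0r => /esym/eqP.
    by rewrite scaler_eq0 (negPf ln0).
  have -> : l = iota (w * ip cj g f) by apply: (mulIf sn0).
  by rewrite iota_norm nwip.
- have [e0|en0] := eqVneq (w * ip cj g f) 0.
    by left; rewrite nwip e0 normr0 iota0.
  right; exists (iota (w * ip cj g f)); last by rewrite iota_norm nwip.
  exists (map_mx iota g).
    apply: contra en0 => /eqP g0.
    suff -> : g = 0 by rewrite ip0l // mulr0.
    apply/matrixP => a k; rewrite [RHS]mxE; apply: iota_inj.
    by have := congr1 (fun M : 'cV[C]_n => M a k) g0; rewrite !mxE.
  by rewrite Mv; under eq_bigr => b _ do rewrite mxE; rewrite Sg iotaM.
Qed.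


Definition nrm x := sq (sqnorm cj x).
Lemma nrm_ge0 x : 0 <= nrm x. Proof. exact/sq_ge0/ip_ge0. Qed.
Lemma nrm_sq x : nrm x ^+ 2 = sqnorm cj x. Proof. exact/sqK/ip_ge0. Qed.

Lemma iotaN (a : K) : iota (- a) = - iota a.
Proof. by apply/eqP; rewrite -addr_eq0 -iotaD addNr iota0. Qed.

Lemma iota_lt (a b : K) : 0 <= a -> 0 <= b -> (iota a < iota b) = (a < b).
Proof.
move=> a0 b0; rewrite !lt_def iota_le //; congr (_ && _).
congr (~~ _); apply/eqP/eqP => [e|->//].
by apply/subr0_eq/iota_inj; rewrite iotaD iotaN e subrr.
Qed.

Lemma fin_max (T : numDomainType) m (h : 'I_m -> T) (i0 : 'I_m) :
  (forall i, h i \is Num.real) -> exists j, forall i, h i <= h j.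
Proof.
move=> hr.
suff [j Hj] : exists j, forall i, i \in enum 'I_m -> h i <= h j.
  by exists j => i; apply: Hj; rewrite mem_enum.
elim: (enum 'I_m) => [|x s [j Hj]]; first by exists i0.
case: (real_leP (hr x) (hr j)) => hxj.
  by exists j => i; rewrite inE => /predU1P [->|/Hj].
exists x => i; rewrite inE => /predU1P [->|/Hj hij] //.
exact: le_trans hij (ltW hxj).
Qed.

Lemma max1_of (T : numDomainType) N (P : {set 'I_N} -> T -> Prop) (h : 'I_N -> T) j :
  P [set j] (h j) -> (forall i, h i <= h j) ->
  (forall i w, P [set i] w -> w <= h i) -> is_max1 P (h j).
Proof.
move=> Pj hm Hle; split; first by exists [set j]; rewrite cards1.
move=> L w /eqP /cards1P [i ->] /Hle hw; exact: le_trans hw (hm i).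
Qed.

Lemma max1_lb (T : numDomainType) N (P : {set 'I_N} -> T -> Prop) v i (u : T) :
  is_max1 P v -> P [set i] u -> u <= v.
Proof. by move=> [_ H] Px; apply: H Px; rewrite cards1. Qed.

Lemma max1_idx (T : numDomainType) N (P : {set 'I_N} -> T -> Prop) v :
  is_max1 P v -> exists i : 'I_N, True.
Proof. by move=> [[L [/eqP /cards1P [i _] _]] _]; exists i. Qed.

Section Main.
Variables (N : nat) (F : 'I_N -> 'cV[K]_n) (p : 'I_N -> K).
Hypotheses (PF : parseval cj F) (Pp : prob_seq p) (p1 : forall i, p i < 1).
Local Notation w := (weight n p).

Lemma w_ge0 i : 0 <= w i.
Proof.
rewrite /weight; case: Pp => _ ->; rewrite mulr_ge0 ?divr_ge0 ?ler0n //.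
by rewrite subr_ge0 ltW.
Qed.

Definition oval (G : 'I_N -> 'cV[K]_n) i := w i * nrm (G i) * nrm (F i).
Definition rval (G : 'I_N -> 'cV[K]_n) i := iota (w i * `|ip cj (G i) (F i)|).
Definition aval (G : 'I_N -> 'cV[K]_n) i := (iota (oval G i) + rval G i) / 2.

Lemma err1 G i : err_op cj p F G [set i] = w i *: (G i *m adj cj (F i)).
Proof. by rewrite /err_op big_set1. Qed.

Lemma opn G i : is_opnorm cj (err_op cj p F G [set i]) (oval G i).
Proof. by rewrite err1; apply: opnorm_rank1; rewrite ?w_ge0 ?nrm_ge0 ?nrm_sq. Qed.

Lemma spr G i : is_specrad iota (err_op cj p F G [set i]) (rval G i).
Proof. by rewrite err1; apply: specrad_rank1; rewrite w_ge0. Qed.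

Lemma oval_ge0 G i : 0 <= oval G i.
Proof. exact: mulr_ge0 (mulr_ge0 (w_ge0 i) (nrm_ge0 _)) (nrm_ge0 _). Qed.

Lemma rval_ge0 G i : 0 <= rval G i.
Proof. by apply: iota_ge0; rewrite mulr_ge0 ?w_ge0. Qed.

Lemma opn_le G i c : is_opnorm cj (err_op cj p F G [set i]) c -> c <= oval G i.
Proof. by case=> _ _ least; have [o0 ob _] := opn G i; apply: least. Qed.

Lemma spr_le G i r : is_specrad iota (err_op cj p F G [set i]) r -> r <= rval G i.
Proof.
case=> _ _ [->|[l el <-]]; first exact: rval_ge0.
by have [_ H _] := spr G i; apply: H.
Qed.

Lemma rval_le G i : rval G i <= iota (oval G i).
Proof.
rewrite iota_le; last exact: oval_ge0; last exact: mulr_ge0 (w_ge0 i) (normr_ge0 _).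
rewrite /oval -mulrA ler_wpM2l ?w_ge0 //.
rewrite -(ler_pXn2r (_ : (0 < 2)%N)) ?nnegrE ?mulr_ge0 ?nrm_ge0 //.
by rewrite exprMn !nrm_sq CS.
Qed.

Lemma aval_ge0 G i : 0 <= aval G i.
Proof. by rewrite divr_ge0 ?ler0n // addr_ge0 ?rval_ge0 // iota_ge0 ?oval_ge0. Qed.

Lemma half2 (x : C) : (x + x) / 2 = x.
Proof. by rewrite -mulr2n -[x *+ 2]mulr_natr mulfK // pnatr_eq0. Qed.

Lemma half_le (x y : C) : x <= y -> x / 2 <= y / 2.
Proof. by move=> h; rewrite ler_wpM2r // invr_ge0 ler0n. Qed.

Lemma rval_le_aval G i : rval G i <= aval G i.
Proof.
rewrite /aval -{1}[rval G i]half2.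
by apply: half_le; rewrite lerD2r rval_le.
Qed.

Lemma aval_le_oval G i : aval G i <= iota (oval G i).
Proof.
rewrite /aval -{2}[iota (oval G i)]half2.
by apply: half_le; rewrite lerD2l rval_le.
Qed.

Lemma awit_le G i a : (exists c r, [/\ is_opnorm cj (err_op cj p F G [set i]) c,
    is_specrad iota (err_op cj p F G [set i]) r & a = (iota c + r) / 2]) ->
  a <= aval G i.
Proof.
move=> [c [r [hc hr ->]]]; apply: half_le; apply: lerD; last exact: spr_le hr.
by have [c0 _ _] := hc; rewrite iota_le ?oval_ge0 //; apply: opn_le.
Qed.

Lemma O1_of G j : (forall i, oval G i <= oval G j) -> is_O1 cj p F G (oval G j).
Proof. move=> hm; apply: max1_of => //; [exact: opn | move=> i c; exact: opn_le]. Qed.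

Lemma r1_of G j : (forall i, rval G i <= rval G j) -> is_r1 cj iota p F G (rval G j).
Proof. move=> hm; apply: max1_of => //; [exact: spr | move=> i c; exact: spr_le]. Qed.

Lemma A1_of G j : (forall i, aval G i <= aval G j) -> is_A1 cj iota p F G (aval G j).
Proof.
move=> hm; apply: max1_of => //; last by move=> i a; apply: awit_le.
by exists (oval G j), (rval G j); split; [exact: opn | exact: spr |].
Qed.


Lemma scal (X Y Z V t : K) : 0 <= X -> X <= V -> Y < V -> 0 <= Z -> 0 < t -> t <= 1 ->
  t * (2 * (V - Y) + Z) <= V - Y ->
  (1 - t) ^+ 2 * X + 2 * (t * (1 - t)) * Y + t ^+ 2 * Z < V.
Proof.
move=> X0 XV YV Z0 t0 t1 ht.
rewrite -subr_gt0.
have -> : V - ((1 - t) ^+ 2 * X + 2 * (t * (1 - t)) * Y + t ^+ 2 * Z)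
    = (1 - t) ^+ 2 * (V - X) + t * ((2 * (V - Y) - t * (2 * (V - Y) + Z)) + t * V).
  by ring.
have D0 : 0 < V - Y by rewrite subr_gt0.
apply: ltr_wpDl; first by rewrite mulr_ge0 ?exprn_ge0 ?subr_ge0.
rewrite mulr_gt0 //; apply: ltr_wpDr; first exact: mulr_ge0 (ltW t0) (le_trans X0 XV).
rewrite subr_gt0; apply: le_lt_trans ht _.
have -> : 2 * (V - Y) = (V - Y) + (V - Y) by ring.
by rewrite ltrDl.
Qed.

Definition aa i := w i * sqnorm cj (F i).

Lemma a_ge0 i : 0 <= aa i.
Proof. exact: mulr_ge0 (w_ge0 i) (ip_ge0 _). Qed.

Lemma dualF : is_dual cj F F.
Proof.
move=> f; have e : f = \sum_i ip cj f (F i) *: F i.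
  by rewrite -frame_opE parseval_S // mul1mx.
by split.
Qed.

Lemma ovalF i : oval F i = aa i.
Proof. by rewrite /oval /aa -mulrA -expr2 nrm_sq. Qed.
Lemma rvalF i : rval F i = iota (aa i).
Proof. by rewrite /rval ger0_norm ?ip_ge0. Qed.
Lemma avalF i : aval F i = iota (aa i).
Proof. by rewrite /aval ovalF rvalF half2. Qed.

Lemma perturb j (hj : forall i, aa i <= aa j) (G' : 'I_N -> 'cV[K]_n) :
  is_dual cj F G' -> (forall i, w i * `|ip cj (G' i) (F i)| < aa j) ->
  exists Gt, is_dual cj F Gt /\ forall i, oval Gt i < aa j.
Proof.
move=> dG' hb.
set v0 := aa j.
have b0 i : 0 <= w i * `|ip cj (G' i) (F i)| by rewrite mulr_ge0 ?w_ge0.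
have v0_gt0 : 0 < v0 := le_lt_trans (b0 j) (hb j).
pose Y i := aa i * (w i * `|ip cj (G' i) (F i)|).
pose Zz i := w i ^+ 2 * sqnorm cj (F i) * sqnorm cj (G' i).
pose D i := v0 ^+ 2 - Y i.
have D0 i : 0 < D i.
  rewrite subr_gt0 /Y expr2; apply: (le_lt_trans (y := v0 * (w i * `|ip cj (G' i) (F i)|))).
    by rewrite ler_wpM2r.
  by rewrite ltr_pM2l.
have Z0 i : 0 <= Zz i := mulr_ge0 (mulr_ge0 (exprn_ge0 _ (w_ge0 i)) (ip_ge0 _)) (ip_ge0 _).
have den0 i : 0 < 2 * D i + Zz i by rewrite ltr_wpDr // mulr_gt0.
pose ti i := D i / (2 * D i + Zz i).
have ti0 i : 0 < ti i by rewrite divr_gt0.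
have ti1 i : ti i <= 1.
  rewrite ler_pdivrMr // mul1r; apply: (le_trans (y := 2 * D i)).
    have -> : 2 * D i = D i + D i by ring.
    by rewrite lerDl ltW.
  by rewrite lerDl.
pose t := \prod_(i < N) ti i.
have t0 : 0 < t by apply: prodr_gt0 => i _.
have tle i : t <= ti i.
  rewrite /t (bigD1 i) //=; apply: ler_piMr; first exact: ltW.
  by apply: prodr_ile1 => k _; rewrite ltW ?ti1.
have tD i : t * (2 * D i + Zz i) <= D i.
  apply: le_trans (ler_wpM2r (ltW (den0 i)) (tle i)) _.
  by rewrite /ti divfK // gt_eqF.
have t1 : t <= 1 := le_trans (tle j) (ti1 j).
have ct : cj t = t by apply: cj_ge0; rewrite ltW.
have c1t : cj (1 - t) = 1 - t by apply: cj_ge0; rewrite subr_ge0.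
pose Gt i := (1 - t) *: F i + t *: G' i.
exists Gt; split.
  move=> f; have eF : f = \sum_i ip cj f (F i) *: F i.
    by rewrite -frame_opE parseval_S // mul1mx.
  have [e1 e2] := dG' f.
  split.
    rewrite /Gt.
    transitivity ((1 - t) *: (\sum_i ip cj f (F i) *: F i) + t *: (\sum_i ip cj f (F i) *: G' i)).
      by rewrite -eF -e1 -scalerDl subrK scale1r.
    rewrite !scaler_sumr -big_split; apply: eq_bigr => i _.
    by rewrite scalerDr !scalerA mulrC [t * _]mulrC.
  rewrite /Gt.
  transitivity ((1 - t) *: (\sum_i ip cj f (F i) *: F i) + t *: (\sum_i ip cj f (G' i) *: F i)).
    by rewrite -eF -e2 -scalerDl subrK scale1r.
  under [RHS]eq_bigr => i _ do rewrite ipDr !ipZr ct c1t scalerDl -!scalerA.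
  by rewrite big_split /= !scaler_sumr.
move=> i.
have o0 : 0 <= oval Gt i by apply: oval_ge0.
rewrite -(ltr_pXn2r (_ : (0 < 2)%N)) ?nnegrE ?(ltW v0_gt0) //.
have -> : oval Gt i ^+ 2 = w i ^+ 2 * sqnorm cj (Gt i) * sqnorm cj (F i).
  by rewrite /oval !exprMn !nrm_sq.
set z := ip cj (G' i) (F i).
have eG : sqnorm cj (Gt i) = (1 - t) ^+ 2 * sqnorm cj (F i)
    + (1 - t) * t * (z + cj z) + t ^+ 2 * sqnorm cj (G' i).
  rewrite /sqnorm /Gt /z ipDl !ipDr !ipZl !ipZr ct c1t (ipC (G' i) (F i)).
  rewrite /sqnorm; ring.
have tt0 : 0 <= (1 - t) * t by rewrite mulr_ge0 ?subr_ge0 // ltW.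
have hG : sqnorm cj (Gt i) <= (1 - t) ^+ 2 * sqnorm cj (F i)
    + (1 - t) * t * (`|z| *+ 2) + t ^+ 2 * sqnorm cj (G' i).
  by rewrite eG lerD2r lerD2l ler_wpM2l.
have wA0 : 0 <= w i ^+ 2 * sqnorm cj (F i) := mulr_ge0 (exprn_ge0 _ (w_ge0 i)) (ip_ge0 _).
apply: (le_lt_trans (y := (1 - t) ^+ 2 * (aa i ^+ 2) + 2 * (t * (1 - t)) * Y i
   + t ^+ 2 * Zz i)).
  rewrite mulrAC; apply: le_trans (ler_wpM2l wA0 hG) _.
  rewrite /Y /Zz /aa -/z le_eqVlt; apply/orP; left; apply/eqP; rewrite mulr2n; ring.
apply: scal => //; first by rewrite exprn_ge0 ?a_ge0.
  by rewrite ler_pXn2r ?nnegrE ?a_ge0 ?(ltW v0_gt0).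
  by rewrite -subr_gt0; exact: D0 i.
exact: tD i.
Qed.



Lemma PSOD_PASOD j (hj : forall i, aa i <= aa j) :
  is_PSOD1 cj iota p F F -> is_PASOD1 cj iota p F F.
Proof.
move=> [_ [vr Hr minr]]; split; first exact: dualF.
exists (iota (aa j)).
  rewrite -avalF; apply: A1_of => i; rewrite !avalF iota_le ?a_ge0 //.
move=> G' a' dG' HA'.
have [k hk] := @fin_max _ _ (rval G') j (fun i => ger0_real (rval_ge0 G' i)).
have h1 := minr G' _ dG' (r1_of hk).
have h2 : iota (aa j) <= vr by rewrite -rvalF; apply: max1_lb Hr (spr F j).
have h3 : aval G' k <= a'.
  apply: max1_lb HA' _; exists (oval G' k), (rval G' k); split=> //; [exact: opn | exact: spr].
exact: le_trans h2 (le_trans h1 (le_trans (rval_le_aval G' k) h3)).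
Qed.

Lemma PASOD_POD j (hj : forall i, aa i <= aa j) :
  is_PASOD1 cj iota p F F -> is_POD1 cj p F F.
Proof.
move=> [_ [va HA minA]]; split; first exact: dualF.
exists (aa j).
  rewrite -ovalF; apply: O1_of => i; rewrite !ovalF //.
move=> G' v' dG' HO'.
have [k hk] := @fin_max _ _ (aval G') j (fun i => ger0_real (aval_ge0 G' i)).
have h1 := minA G' _ dG' (A1_of hk).
have h2 : iota (aa j) <= va.
  rewrite -avalF; apply: max1_lb HA _.
  by exists (oval F j), (rval F j); split=> //; [exact: opn | exact: spr].
have h3 : oval G' k <= v' by apply: max1_lb HO' (opn G' k).
have v'0 : 0 <= v' := le_trans (oval_ge0 G' k) h3.
rewrite -(iota_le (a_ge0 j) v'0).
apply: le_trans h2 (le_trans h1 (le_trans (aval_le_oval G' k) _)).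
by rewrite iota_le ?oval_ge0.
Qed.

Lemma POD_PSOD j (hj : forall i, aa i <= aa j) :
  is_POD1 cj p F F -> is_PSOD1 cj iota p F F.
Proof.
move=> [_ [vo HO minO]]; split; first exact: dualF.
exists (iota (aa j)).
  rewrite -rvalF; apply: r1_of => i; rewrite !rvalF iota_le ?a_ge0 //.
move=> G' v' dG' Hr'.
have rb i : rval G' i <= v' by apply: max1_lb Hr' (spr G' i).
have v'r : v' \is Num.real := ger0_real (le_trans (rval_ge0 G' j) (rb j)).
case: (real_leP (ger0_real (iota_ge0 (a_ge0 j))) v'r) => // hlt.
exfalso.
have hb i : w i * `|ip cj (G' i) (F i)| < aa j.
  rewrite -iota_lt; last exact: a_ge0; last exact: mulr_ge0 (w_ge0 i) (normr_ge0 _).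
  exact: le_lt_trans (rb i) hlt.
have [Gt [dt ht]] := perturb hj dG' hb.
have [k hk] := @fin_max _ _ (oval Gt) j (fun i => ger0_real (oval_ge0 Gt i)).
have h1 := minO Gt _ dt (O1_of hk).
have h2 : aa j <= vo by rewrite -ovalF; apply: max1_lb HO (opn F j).
by have := lt_le_trans (ht k) (le_trans h2 h1); rewrite ltxx.
Qed.

Lemma main_gen :
  let G := canonical_dual cj F in
  (is_POD1 cj p F G <-> is_PSOD1 cj iota p F G) /\
  (is_PSOD1 cj iota p F G <-> is_PASOD1 cj iota p F G).
Proof.
have -> : canonical_dual cj F = F.
  by apply: functional_extensionality => i; rewrite /canonical_dual parseval_S // invmx1 mul1mx.
move=> /=.
have idx : forall P : Prop, (forall j : 'I_N, (forall i, aa i <= aa j) -> P) ->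
    (exists i : 'I_N, True) -> P.
  move=> P HP [i0 _]; have [j hj] := @fin_max _ _ aa i0 (fun i => ger0_real (a_ge0 i)).
  exact: HP hj.
split; split.
- move=> H; apply: idx (fun j hj => POD_PSOD hj H) _.
  by case: H => _ [v Hv _]; apply: max1_idx Hv.
- move=> H; apply: idx (fun j hj => PASOD_POD hj (PSOD_PASOD hj H)) _.
  by case: H => _ [v Hv _]; apply: max1_idx Hv.
- move=> H; apply: idx (fun j hj => PSOD_PASOD hj H) _.
  by case: H => _ [v Hv _]; apply: max1_idx Hv.
- move=> H; apply: idx (fun j hj => POD_PSOD hj (PASOD_POD hj H)) _.
  by case: H => _ [v Hv _]; apply: max1_idx Hv.
Qed.

End Main.
End Basic.

End GenPart.
Import GenPart.

Local Open Scope complex_scope.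

Section Inst.
Variable R : rcfType.

Lemma c_mul_cj (x : R[i]) : x * x^* = `|x| ^+ 2.
Proof.
rewrite -add_Re2_Im2; case: x => a b /=; apply/eqP; rewrite eq_complex /=.
apply/andP; split; apply/eqP; ring.
Qed.

Lemma c_pol (z : R[i]) : (forall k, k^* * z + k * z^* = 0) -> z = 0.
Proof.
case: z => a b H; have := H 1; have := H 'i.
move=> /eqP; rewrite eq_complex /= => /andP [/eqP h1 /eqP h2].
move=> /eqP; rewrite eq_complex /= => /andP [/eqP h3 /eqP h4].
apply/eqP; rewrite eq_complex /=; apply/andP; split; apply/eqP; nra.
Qed.

Lemma c_Re (x : R[i]) : x + x^* <= `|x| *+ 2.
Proof.
rewrite normc_def; case: x => a b /=.
rewrite lecE /=; apply/andP; split.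
  by rewrite addr0 subrr.
  idtac.
have : a <= Num.sqrt (a ^+ 2 + b ^+ 2).
  apply: le_trans (ler_norm a) _; rewrite -sqrtr_sqr ler_sqrt ?lerDl ?sqr_ge0 //.
  by rewrite addr_ge0 ?sqr_ge0.
move=> h; lra.
Qed.

Lemma c_ge0 (x : R[i]) : 0 <= x -> x^* = x.
Proof. by move=> /ger0_real /complex_realP [k ->]; exact: conjc_real. Qed.

End Inst.

Theorem corollary3p1 (R : rcfType) (n N : nat) :
  (* real Hilbert space R^n *)
  (forall (F : 'I_N -> 'cV[R]_n) (p : 'I_N -> R),
     parseval id F -> prob_seq p -> (forall i, p i < 1) ->
     let G := canonical_dual id F in
     (is_POD1 id p F G <->
        is_PSOD1 id (fun x : R => x%:C) p F G) /\
     (is_PSOD1 id (fun x : R => x%:C) p F G <->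
        is_PASOD1 id (fun x : R => x%:C) p F G)) /\
  (* complex Hilbert space C^n *)
  (forall (F : 'I_N -> 'cV[R[i]]_n) (p : 'I_N -> R[i]),
     parseval (@conjc R) F -> prob_seq p -> (forall i, p i < 1) ->
     let G := canonical_dual (@conjc R) F in
     (is_POD1 (@conjc R) p F G <-> is_PSOD1 (@conjc R) id p F G) /\
     (is_PSOD1 (@conjc R) id p F G <-> is_PASOD1 (@conjc R) id p F G)).
Proof.
split.
- move=> F p PF Pp p1.
  eapply main_gen with (sq := Num.sqrt); try eassumption.
  + by [].
  + by [].
  + by [].
  + by [].
  + by move=> x; rewrite real_normK ?num_real // expr2.
  + by move=> z H; have := H 1; rewrite mul1r; lra.
  + by move=> x; rewrite mulr2n lerD ?ler_norm.
  + by move=> x _; rewrite sqrtr_ge0.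
  + by move=> x x0; rewrite sqr_sqrtr.
  + by move=> x y /=; rewrite rmorphD.
  + by move=> x y /=; rewrite rmorphM.
  + by [].
  + by move=> x; rewrite normc_def /= expr0n addr0 sqrtr_sqr.
  + by move=> x [].
  + by move=> x y _ _; rewrite lecR.
- move=> F p PF Pp p1.
  eapply main_gen with (sq := @sqrtc R); try eassumption.
  + by move=> x y; rewrite rmorphD.
  + by move=> x y; rewrite rmorphM.
  + exact: conjcK.
  + exact: c_ge0.
  + exact: c_mul_cj.
  + exact: c_pol.
  + exact: c_Re.
  + by move=> x x0; rewrite sqrtc_ge0.
  + by move=> x x0; rewrite sqr_sqrtc.
  + by [].
  + by [].
  + by [].
  + by [].
  + by [].
  + by [].
Qed.
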